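(* Let $n\ge1$, $\tau\in S_n$, $\Sigma_0=(1\,2)(3\,4)\cdots(2n-1\,\,2n)\in S_{2n}$, $\Sigma_1'=\prod_{i=1}^n(2i-1,\ 2\tau(i))$ and $\Sigma_{\rm tot}=\Sigma_0\Sigma_1'$, which preserves the set $V_n^-=\{1,3,\dots,2n-1\}$ and the set $V_n^+=\{2,4,\dots,2n\}$. Then the restriction of $\Sigma_{\rm tot}$ to $V_n^-$ has exactly $C(\tau)$ cycles, and the restriction of $\Sigma_{\rm tot}$ to $V_n^+$ also has exactly $C(\tau)$ cycles. Consequently $C(\Sigma_0\Sigma_1')=2C(\tau)$.
   Context: For a permutation $\pi$, $C(\pi)$ denotes the number of cycles of $\pi$ in its disjoint cycle decomposition, fixed points counted as cycles of length one. $S_m$ is the symmetric group on $\{1,\dots,m\}$. *)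

(* Defs.v *)
From mathcomp Require Import all_boot all_order all_fingroup.
Set Implicit Arguments. Unset Strict Implicit. Unset Printing Implicit Defensive.

(* Points {1,...,2n} are represented 0-indexed by 'I_(n.*2):
   the paper's point 2i-1 (i = 1..n) is  ev i  (value 2(i-1)),
   the paper's point 2i           is  od i  (value 2(i-1)+1),
   for i : 'I_n (0-indexed). *)

Lemma ev_lt n (i : 'I_n) : i.*2 < n.*2.
Proof. by rewrite ltn_double. Qed.

Lemma od_lt n (i : 'I_n) : (i.*2).+1 < n.*2.
Proof. by rewrite ltn_Sdouble. Qed.

Definition ev n (i : 'I_n) : 'I_(n.*2) := Ordinal (ev_lt i).
Definition od n (i : 'I_n) : 'I_(n.*2) := Ordinal (od_lt i).

Definition Vminus n : {set 'I_(n.*2)} := [set ev i | i : 'I_n].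
Definition Vplus n : {set 'I_(n.*2)} := [set od i | i : 'I_n].

Definition Sigma0 n : {perm 'I_(n.*2)} :=
  (\prod_(i < n) tperm (ev i) (od i))%g.

Definition Sigma1' n (tau : {perm 'I_n}) : {perm 'I_(n.*2)} :=
  (\prod_(i < n) tperm (ev i) (od (tau i)))%g.

(* Sigma_tot = Sigma_0 Sigma_1' as composition of maps (apply Sigma_1' first,
   then Sigma_0).  In MathComp, (s * t) x = t (s x), hence the order. *)
Definition Sigma_tot n (tau : {perm 'I_n}) : {perm 'I_(n.*2)} :=
  (Sigma1' tau * Sigma0 n)%g.

(* C(pi): number of cycles (fixed points included) *)
Definition ncycles (T : finType) (s : {perm T}) : nat := #|porbits s|.

(* number of cycles of the restriction of s to an s-invariant set V:
   the number of distinct cycles of s through points of V *)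
Definition ncycles_on (T : finType) (s : {perm T}) (V : {set T}) : nat :=
  #|[set porbit s x | x in V]|.

(* Main.v *)
Require Import Defs.
From mathcomp Require Import all_boot all_order all_fingroup.
Set Implicit Arguments. Unset Strict Implicit. Unset Printing Implicit Defensive.

Section Aux.
Variables (T : finType) (I : eqType) (f g : I -> T).
Hypotheses (finj : injective f) (ginj : injective g) (fg : forall i j, f i != g j).

Lemma prod_fix (s : seq I) x : (forall i, i \in s -> x != f i /\ x != g i) ->
  (\prod_(j <- s) tperm (f j) (g j))%g x = x.
Proof.
elim: s => [|a s IH] H; first by rewrite big_nil perm1.
rewrite big_cons permM.
have [H1 H2] := H a (mem_head _ _).
rewrite tpermD 1?eq_sym //; apply: IH => i Hi; apply: H; by rewrite inE Hi orbT.
Qed.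

Lemma prod_f (s : seq I) i : uniq s -> i \in s ->
  (\prod_(j <- s) tperm (f j) (g j))%g (f i) = g i.
Proof.
elim: s => [|a s IH] //= /andP[Ha Us]; rewrite inE big_cons permM.
case: (eqVneq i a) => [-> _|ne /= Hi].
  rewrite tpermL prod_fix // => j Hj; split; first by rewrite eq_sym fg.
  by apply/eqP => /ginj E; move: Ha; rewrite E Hj.
rewrite tpermD ?IH //; first by apply/eqP => /finj E; move: ne; rewrite E eqxx.
by rewrite eq_sym fg.
Qed.

Lemma prod_g (s : seq I) i : uniq s -> i \in s ->
  (\prod_(j <- s) tperm (f j) (g j))%g (g i) = f i.
Proof.
elim: s => [|a s IH] //= /andP[Ha Us]; rewrite inE big_cons permM.
case: (eqVneq i a) => [-> _|ne /= Hi].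
  rewrite tpermR prod_fix // => j Hj; split; last by rewrite fg.
  by apply/eqP => /finj E; move: Ha; rewrite E Hj.
rewrite tpermD ?IH // ?fg //.
by apply/eqP => /ginj E; move: ne; rewrite E eqxx.
Qed.
End Aux.

Lemma porbit_conj (T U : finType) (S : {perm T}) (t : {perm U}) (h : U -> T) :
  (forall x, S (h x) = h (t x)) -> forall x, porbit S (h x) = h @: porbit t x.
Proof.
move=> H x.
have HX k y : (S ^+ k)%g (h y) = h ((t ^+ k)%g y).
  by rewrite !permX; elim: k y => [|k IH] y //=; rewrite IH H.
apply/setP => y; apply/porbitP/imsetP => [[k ->]|[z /porbitP[k ->] ->]].
  by exists ((t ^+ k)%g x); [apply: mem_porbit | rewrite HX].
by exists k; rewrite HX.
Qed.

Lemma ev_inj n : injective (@ev n).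
Proof. by move=> i j /(congr1 val) /= /(can_inj doubleK) /val_inj. Qed.
Lemma od_inj n : injective (@od n).
Proof. by move=> i j /(congr1 val) /= [] /(can_inj doubleK) /val_inj. Qed.
Lemma ev_od n (i j : 'I_n) : ev i != od j.
Proof.
apply/eqP => /(congr1 val) /= E.
by have := congr1 odd E; rewrite /= !odd_double.
Qed.

Lemma Stot_ev n (tau : {perm 'I_n}) i : Sigma_tot tau (ev i) = ev (tau i).
Proof.
rewrite /Sigma_tot permM /Sigma1' /Sigma0.
have gi : injective (fun j => od (tau j)) by move=> a b /od_inj /perm_inj.
have fg1 : forall a b : 'I_n, ev a != od (tau b) by move=> *; exact: ev_od.
have fg2 : forall a b : 'I_n, ev a != od b by move=> *; exact: ev_od.
rewrite (prod_f (@ev_inj n) gi fg1) ?index_enum_uniq ?mem_index_enum //.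
by rewrite (prod_g (@ev_inj n) (@od_inj n) fg2) ?index_enum_uniq ?mem_index_enum.
Qed.

Lemma Stot_od n (tau : {perm 'I_n}) i : Sigma_tot tau (od i) = od ((tau^-1)%g i).
Proof.
rewrite /Sigma_tot permM /Sigma1' /Sigma0.
have gi : injective (fun j => od (tau j)) by move=> a b /od_inj /perm_inj.
have fg1 : forall a b : 'I_n, ev a != od (tau b) by move=> *; exact: ev_od.
have fg2 : forall a b : 'I_n, ev a != od b by move=> *; exact: ev_od.
have -> : od i = od (tau ((tau^-1)%g i)) by rewrite permKV.
rewrite (prod_g (@ev_inj n) gi fg1) ?index_enum_uniq ?mem_index_enum //.
by rewrite (prod_f (@ev_inj n) (@od_inj n) fg2) ?index_enum_uniq ?mem_index_enum.
Qed.

Lemma Vcover n : [set: 'I_(n.*2)] = Vminus n :|: Vplus n.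
Proof.
apply/setP => x; rewrite !inE; symmetry; apply/orP.
have hi : x./2 < n by rewrite ltn_half_double.
have E := odd_double_half x.
case: (boolP (odd x)) => ox; [right | left]; apply/imsetP; exists (Ordinal hi) => //;
  apply: val_inj => /=.
  by move: E; rewrite ox => E; rewrite -[X in X = _]E add1n.
by move: E; rewrite (negbTE ox) => E; rewrite -[X in X = _]E add0n.
Qed.

Theorem lemma2 (n : nat) (hn : 0 < n) (tau : {perm 'I_n}) :
  [/\ [set Sigma_tot tau x | x in Vminus n] = Vminus n,
      [set Sigma_tot tau x | x in Vplus n] = Vplus n,
      ncycles_on (Sigma_tot tau) (Vminus n) = ncycles tau,
      ncycles_on (Sigma_tot tau) (Vplus n) = ncycles tau
    & ncycles (Sigma_tot tau) = 2 * ncycles tau].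
Proof.
set S := Sigma_tot tau.
have hA : [set porbit S x | x in Vminus n] = (fun A : {set 'I_n} => @ev n @: A) @: porbits tau.
  rewrite /Vminus /porbits -!imset_comp; apply: eq_imset => i /=.
  exact: (porbit_conj (Stot_ev tau)).
have hB : [set porbit S x | x in Vplus n] = (fun A : {set 'I_n} => @od n @: A) @: porbits tau.
  rewrite /Vplus /porbits -!imset_comp; apply: eq_imset => i /=.
  by rewrite (porbit_conj (Stot_od tau)) porbitV.
have cA : ncycles_on S (Vminus n) = ncycles tau.
  by rewrite /ncycles_on hA card_imset //; apply: imset_inj; exact: ev_inj.
have cB : ncycles_on S (Vplus n) = ncycles tau.
  by rewrite /ncycles_on hB card_imset //; apply: imset_inj; exact: od_inj.
split => //.
- rewrite /Vminus -imset_comp; apply/setP => y; apply/imsetP/imsetP.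
    by move=> [i _ ->]; exists (tau i) => //; rewrite /= Stot_ev.
  move=> [i _ ->]; exists ((tau^-1)%g i) => //; by rewrite /= Stot_ev permKV.
- rewrite /Vplus -imset_comp; apply/setP => y; apply/imsetP/imsetP.
    by move=> [i _ ->]; exists ((tau^-1)%g i) => //; rewrite /= Stot_od.
  move=> [i _ ->]; exists (tau i) => //; by rewrite /= Stot_od permK.
- rewrite /ncycles; have -> : porbits S = [set porbit S x | x in Vminus n :|: Vplus n].
    rewrite -Vcover; apply/setP => X; apply/imsetP/imsetP => -[x _ ->]; by exists x.
  rewrite /ncycles imsetU cardsU -!/(ncycles_on S _) cA cB.
  suff -> : [set porbit S x | x in Vminus n] :&: [set porbit S x | x in Vplus n] = set0.
    by rewrite cards0 subn0 mul2n addnn.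
  apply/setP => X; rewrite !inE hA hB.
  apply/negP => /andP[/imsetP[A _ ->] /imsetP[B HB EB]].
  case/imsetP: HB => b _ Hb; subst B.
  have : od b \in @od n @: porbit tau b by rewrite imset_f // porbit_id.
  by rewrite -EB => /imsetP[a _ /eqP]; rewrite eq_sym (negbTE (ev_od _ _)).
Qed.
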